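(* Let $G=(V,E)$ be a finite connected graph (loops allowed) equipped with a random walk $m=\{m_v\}_{v\in V}$ which is ergodic, with invariant distribution $\nu$, and suppose $G$ (with $m$) has Ricci curvature at least $\kappa>0$. Then for every $1$-Lipschitz function $f\colon V\to\mathbb{R}$ and every $t\ge 1$, \[\nu\big(f-E_\nu[f]>t\big)\le \exp\Big(-\frac{t^2\kappa}{7}\Big)\quad\text{and}\quad \nu\big(f-E_\nu[f]<-t\big)\le \exp\Big(-\frac{t^2\kappa}{7}\Big).\]
   Context: For a vertex $v$, $\Gamma(v)$ is the set of neighbors of $v$ and $N(v)=\Gamma(v)\cup\{v\}$. A random walk on $G$ is a family $m=\{m_v\}_{v\in V}$ of probability distributions on $V$ with $m_v$ supported on $N(v)$. It is ergodic if it has a unique invariant distribution $\nu$ (i.e. $\sum_{x}\nu(x)m_x(y)=\nu(y)$ for all $y$) and the distributions of the walk converge to $\nu$ from any starting vertex. $d(x,y)$ is the graph distance. For probability distributions $m_1,m_2$ on $V$, the transportation distance is $W(m_1,m_2)=\inf_A\sum_{x,y}A(x,y)d(x,y)$, the infimum over couplings $A\colon V\times V\to[0,1]$ with $\sum_y A(x,y)=m_1(x)$, $\sum_x A(x,y)=m_2(y)$. The (Ollivier) Ricci curvature is $\kappa(x,y)=1-W(m_x,m_y)/d(x,y)$ for $x\ne y$; $G$ has Ricci curvature at least $\kappa_0$ if $\kappa(x,y)\ge\kappa_0$ for all distinct $x,y\in V$. A function $f\colon V\to\mathbb{R}$ is $c$-Lipschitz if $|f(u)-f(v)|\le c$ for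 every edge $uv\in E$. $E_\nu$ denotes expectation with respect to $\nu$, and $\nu(\cdot)$ the $\nu$-probability of an event on $V$. *)

(* Defs.v *)
From Stdlib Require Import Reals.
From mathcomp Require Import all_boot.
Set Implicit Arguments. Unset Strict Implicit. Unset Printing Implicit Defensive.
Local Open Scope R_scope.

Definition rsum (V : finType) (F : V -> R) : R := \big[Rplus/R0]_(x : V) F x.

Definition sym_graph (V : finType) (adj : rel V) : Prop := symmetric adj.
Definition graph_connected (V : finType) (adj : rel V) : Prop := forall x y, connect adj x y.

Definition closed_nbhd (V : finType) (adj : rel V) (v u : V) : bool := adj v u || (u == v).

Fixpoint reach (V : finType) (adj : rel V) (n : nat) (x y : V) : bool :=
  match n with
  | O => x == y
  | S n' => [exists z, adj x z && reach adj n' z y]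
  end.

(* graph distance: least n with a walk of length n from x to y
   (in a graph_connected graph it is < #|V|) *)
Definition gdist (V : finType) (adj : rel V) (x y : V) : nat :=
  find (fun n => reach adj n x y) (iota 0 #|V|).

Definition is_distribution (V : finType) (p : V -> R) : Prop :=
  (forall x, 0 <= p x) /\ rsum p = 1.

Definition random_walk (V : finType) (adj : rel V) (m : V -> V -> R) : Prop :=
  forall x, is_distribution (m x) /\ (forall y, m x y <> 0 -> closed_nbhd adj x y).

Definition rw_invariant (V : finType) (m : V -> V -> R) (nu : V -> R) : Prop :=
  is_distribution nu /\ forall y, rsum (fun x => nu x * m x y) = nu y.

Fixpoint mstep (V : finType) (m : V -> V -> R) (t : nat) (x y : V) : R :=
  match t with
  | O => if x == y then 1 else 0
  | S t' => rsum (fun z => mstep m t' x z * m z y)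
  end.

Definition ergodic (V : finType) (m : V -> V -> R) : Prop :=
  exists nu, rw_invariant m nu /\ (forall nu', rw_invariant m nu' -> nu' = nu) /\
    (forall x y, Un_cv (fun t => mstep m t x y) (nu y)).

Definition coupling (V : finType) (m1 m2 : V -> R) (A : V -> V -> R) : Prop :=
  (forall x y, 0 <= A x y <= 1) /\
  (forall x, rsum (fun y => A x y) = m1 x) /\
  (forall y, rsum (fun x => A x y) = m2 y).

Definition transport_cost (V : finType) (adj : rel V) (A : V -> V -> R) : R :=
  rsum (fun x => rsum (fun y => A x y * INR (gdist adj x y))).

Definition is_inf (S : R -> Prop) (w : R) : Prop :=
  (forall c, S c -> w <= c) /\ (forall w', (forall c, S c -> w' <= c) -> w' <= w).

Definition is_W (V : finType) (adj : rel V) (m1 m2 : V -> R) (w : R) : Prop :=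
  is_inf (fun c => exists A, coupling m1 m2 A /\ c = transport_cost adj A) w.

Definition ricci_at_least (V : finType) (adj : rel V) (m : V -> V -> R) (k0 : R) : Prop :=
  forall x y, x <> y -> forall w, is_W adj (m x) (m y) w ->
    k0 <= 1 - w / INR (gdist adj x y).

Definition lipschitz (V : finType) (adj : rel V) (c : R) (f : V -> R) : Prop :=
  forall u v, adj u v -> Rabs (f u - f v) <= c.

Definition expect (V : finType) (nu : V -> R) (f : V -> R) : R := rsum (fun x => nu x * f x).

Definition prob (V : finType) (nu : V -> R) (P : V -> Prop) (Pdec : forall x, {P x} + {~ P x}) : R :=
  rsum (fun x => if Pdec x then nu x else 0).
Arguments prob {V} nu P Pdec.

(* Main.v *)
From HB Require Import structures.
Require Import Defs.
From Stdlib Require Import Reals Lra Lia Psatz Classical.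
From mathcomp Require Import all_boot zify.
Set Implicit Arguments. Unset Strict Implicit. Unset Printing Implicit Defensive.
Local Open Scope R_scope.

Lemma exp_poly_aux (y : R) : -8/7 <= y <= 8/7 ->
  1 <= (1 + y + 7/4 * y^2) * (1 - y/4)^4.
Proof.
intros H.
assert (Hq : 0 <= 9/8 - 23/16 * y + 153/256 * y^2 - 27/256 * y^3 + 7/1024 * y^4).
{ nra. }
assert (E : (1 + y + 7/4 * y^2) * (1 - y/4)^4 - 1 =
   y^2 * (9/8 - 23/16 * y + 153/256 * y^2 - 27/256 * y^3 + 7/1024 * y^4)) by field.
assert (0 <= y^2) by nra.
nra.
Qed.

Lemma exp_quad (y : R) : -8/7 <= y <= 8/7 -> exp y <= 1 + y + 7/4 * y^2.
Proof.
intros H.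
pose proof (exp_ineq1_le (- (y/4))) as H1.
assert (Hpos : 0 < 1 - y/4) by lra.
assert (He : exp y = (exp (y/4))^4).
{ replace y with (y/4+y/4+y/4+y/4) at 1 by field. rewrite !exp_plus. simpl. ring. }
assert (Hb : exp (y/4) * (1 - y/4) <= 1).
{ assert (E1 : exp (y/4) * exp (- (y/4)) = 1).
  { rewrite <- exp_plus. replace (y/4 + - (y/4)) with 0 by field. apply exp_0. }
  rewrite <- E1. apply Rmult_le_compat_l; [left; apply exp_pos|lra]. }
pose proof (exp_poly_aux H) as P.
set (a := exp (y/4)) in *. set (b := 1 - y/4) in *.
assert (0 < a) by apply exp_pos.
assert (Hab4 : (a*b)^4 <= 1).
{ assert (0 <= a*b) by nra. 
  replace 1 with (1^4) by ring. apply pow_incr; lra. }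
rewrite He.
assert (0 < b^4) by (apply pow_lt; lra).
assert (a^4 * b^4 <= 1) by (rewrite <- Rpow_mult_distr; lra).
nra.
Qed.

Lemma Rplus_assoc' : associative Rplus. Proof. move=> *; ring. Qed.
HB.instance Definition _ := Monoid.isComLaw.Build R R0 Rplus Rplus_assoc' Rplus_comm Rplus_0_l.

Section RS.
Variable V : finType.
Implicit Types F G : V -> R.

Lemma rsumD F G : rsum (fun x => F x + G x) = rsum F + rsum G.
Proof. by rewrite /rsum big_split. Qed.

Lemma rsumZ (c : R) F : rsum (fun x => c * F x) = c * rsum F.
Proof. rewrite /rsum; elim/big_rec2: _ => [|i a b _ ->]; ring. Qed.

Lemma rsum_le F G : (forall x, F x <= G x) -> rsum F <= rsum G.
Proof. move=> H; rewrite /rsum; elim/big_rec2: _ => [|i a b _ Hab]; [lra|]. by apply Rplus_le_compat. Qed.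

Lemma rsum_ext F G : (forall x, F x = G x) -> rsum F = rsum G.
Proof. by move=> H; rewrite /rsum; apply: eq_bigr => i _; apply H. Qed.

Lemma rsum_ge0 F : (forall x, 0 <= F x) -> 0 <= rsum F.
Proof. move=> H; apply Rle_trans with (rsum (fun _ : V => 0)); last by apply rsum_le.
  rewrite /rsum; elim/big_rec: _ => [|i a _ Ha]; lra. Qed.

Lemma rsum0 : rsum (fun _ : V => 0) = 0.
Proof. rewrite /rsum; elim/big_rec: _ => [|i a _ ->]; ring. Qed.

Lemma rsum_term F x : (forall y, 0 <= F y) -> F x <= rsum F.
Proof. move=> H; rewrite /rsum (bigD1 x) //=.
  have : 0 <= \big[Rplus/R0]_(i | i != x) F i.
    elim/big_rec: _ => [|i a _ Ha]; [lra|]. have := H i. move=> ?; lra.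
  move=> Hb; lra. Qed.

Lemma rsum_exchange (A : V -> V -> R) :
  rsum (fun x => rsum (fun y => A x y)) = rsum (fun y => rsum (fun x => A x y)).
Proof. by rewrite /rsum exchange_big. Qed.

Lemma rsum_delta (x : V) F : rsum (fun y => (if x == y then 1 else 0) * F y) = F x.
Proof. rewrite /rsum (bigD1 x) //= eqxx.
  rewrite big1; first ring. move=> i /negbTE; rewrite eq_sym => ->; ring. Qed.
End RS.

Section G.
Variable V : finType.
Variable adj : rel V.

Lemma reach_cat a b x y z : reach adj a x y -> reach adj b y z -> reach adj (a + b) x z.
Proof.
elim: a x => [|a IH] x /=.
- by move/eqP => ->.
- move=> /existsP [w /andP [Hxw Hw]] Hb; apply/existsP; exists w.
  by rewrite Hxw (IH _ Hw Hb).
Qed.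

Lemma gdist_le n x y : reach adj n x y -> (gdist adj x y <= n)%nat.
Proof.
move=> Hr; rewrite /gdist.
case: (ltnP n #|V|) => Hn.
- rewrite leqNgt; apply/negP => Hf.
  have := before_find 0%nat Hf. rewrite nth_iota // add0n Hr. done.
- apply: leq_trans (find_size _ _) _. by rewrite size_iota.
Qed.

Lemma reach_path x p : path adj x p -> reach adj (size p) x (last x p).
Proof.
elim: p x => [|z p IH] x /=; first by [].
move=> /andP [Hxz Hp]; apply/existsP; exists z. by rewrite Hxz IH.
Qed.

Hypothesis Hconn : graph_connected adj.

Lemma reach_exists x y : exists n, (n < #|V|)%nat /\ reach adj n x y.
Proof.
have := Hconn x y. case/connectP => p Hp ->.
case/shortenP: Hp => p' Hp' Hu _.
exists (size p'); split; last exact: reach_path.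
have := max_card (mem (x :: p')). rewrite (card_uniqP Hu) /=. lia.
Qed.

Lemma gdist_reach x y : reach adj (gdist adj x y) x y /\ (gdist adj x y < #|V|)%nat.
Proof.
have [n [Hn Hr]] := reach_exists x y.
have Hh : has (fun n => reach adj n x y) (iota 0 #|V|).
  apply/hasP; exists n; [rewrite mem_iota; lia | exact Hr].
have := nth_find 0%nat Hh. have := Hh; rewrite has_find size_iota => Hlt.
rewrite nth_iota // add0n => Hr'; split => //.
Qed.

Lemma gdist_tri x y z : (gdist adj x z <= gdist adj x y + gdist adj y z)%nat.
Proof.
apply gdist_le. apply reach_cat with y; apply gdist_reach.
Qed.

Lemma gdist_refl x : gdist adj x x = 0%nat.
Proof. apply/eqP; rewrite -leqn0; apply gdist_le => /=. by []. Qed.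

Lemma gdist_eq0 x y : gdist adj x y = 0%nat -> x = y.
Proof. move=> H; have [Hr _] := gdist_reach x y. by rewrite H /= in Hr; apply/eqP. Qed.

Lemma gdist_nbhd x y : closed_nbhd adj x y -> (gdist adj x y <= 1)%nat.
Proof.
rewrite /closed_nbhd => /orP [H|/eqP ->].
- apply gdist_le => /=. apply/existsP; exists y; by rewrite H eqxx.
- by rewrite gdist_refl.
Qed.

Lemma lip_reach (g : V -> R) L n u v : lipschitz adj L g -> reach adj n u v ->
  Rabs (g u - g v) <= L * INR n.
Proof.
move=> Hg; elim: n u => [|n IH] u /=.
- move/eqP => ->. rewrite Rminus_diag_eq // Rabs_R0; lra.
- move=> /existsP [w /andP [Huw Hw]].
  have H1 := Hg _ _ Huw. have H2 := IH _ Hw.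
  have HS := S_INR n.
  have := Rabs_triang (g u - g w) (g w - g v).
  replace (g u - g w + (g w - g v)) with (g u - g v) by ring. move=> Ht. rewrite -/(INR n.+1) HS. lra.
Qed.

Lemma lip_gdist (g : V -> R) L u v : lipschitz adj L g ->
  Rabs (g u - g v) <= L * INR (gdist adj u v).
Proof. move=> Hg; apply lip_reach => //; apply gdist_reach. Qed.

End G.

Lemma Rabs_le_inv a b : Rabs a <= b -> - b <= a <= b.
Proof. move=> H; split; [have := Rle_abs (-a); rewrite Rabs_Ropp; lra | have := Rle_abs a; lra]. Qed.

Lemma exp_le x y : x <= y -> exp x <= exp y.
Proof. case => [H|->]; [left; by apply exp_increasing | lra]. Qed.

Section D.
Variable V : finType.
Variable adj : rel V.
Variable m : V -> V -> R.
Variable kappa : R.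
Hypothesis Hsym : sym_graph adj.
Hypothesis Hconn : graph_connected adj.
Hypothesis Hwalk : random_walk adj m.
Hypothesis Hric : ricci_at_least adj m kappa.

Definition Mop (h : V -> R) x := rsum (fun y => m x y * h y).
Definition glip L (g : V -> R) := forall u v, Rabs (g u - g v) <= L * INR (gdist adj u v).

Lemma m_ge0 x y : 0 <= m x y.
Proof. by have [[H _] _] := Hwalk x. Qed.
Lemma m_sum x : rsum (m x) = 1.
Proof. by have [[_ H] _] := Hwalk x. Qed.
Lemma m_le1 x y : m x y <= 1.
Proof. rewrite -(m_sum x). apply rsum_term => z; apply m_ge0. Qed.

Lemma supp_bound L g x y : glip L g -> 0 <= L -> m x y <> 0 -> Rabs (g y - g x) <= L.
Proof.
move=> Hg HL Hm. have [_ Hs] := Hwalk x. have Hd := gdist_nbhd (Hs _ Hm).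
have := Hg x y. rewrite Rabs_minus_sym.
have := le_INR _ _ (elimT leP Hd). rewrite /= => Hi Hb.
have : L * INR (gdist adj x y) <= L * 1 by apply Rmult_le_compat_l.
lra.
Qed.

Lemma bound_pt L g x y : glip L g -> 0 <= L ->
  - (L * m x y) <= m x y * (g y - g x) <= L * m x y.
Proof.
move=> Hg HL. have Hm0 := m_ge0 x y.
case: (Req_dec (m x y) 0) => Hm.
- rewrite Hm; lra.
- have := Rabs_le_inv (supp_bound Hg HL Hm). move=> [H1 H2]; split; nra.
Qed.

Lemma Mop_dev g x : Mop g x - g x = rsum (fun y => m x y * (g y - g x)).
Proof.
rewrite (rsum_ext (G := fun y => m x y * g y + (- g x) * m x y)); last by move=> y; ring.
rewrite rsumD rsumZ m_sum /Mop. ring.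
Qed.

Lemma avg_bound L g x : glip L g -> 0 <= L -> Rabs (Mop g x - g x) <= L.
Proof.
move=> Hg HL. rewrite Mop_dev. apply Rabs_le. 
have E : rsum (fun y => L * m x y) = L by rewrite rsumZ m_sum; ring.
split.
- have := rsum_le (F := fun y => - (L * m x y)) (G := fun y => m x y * (g y - g x))
     (fun y => proj1 (@bound_pt L g x y Hg HL)).
  rewrite (rsum_ext (G := fun y => (-1) * (L * m x y))); last by move=> y; ring.
  rewrite rsumZ E. lra.
- have := rsum_le (G := fun y => L * m x y) (F := fun y => m x y * (g y - g x))
     (fun y => proj2 (@bound_pt L g x y Hg HL)).
  rewrite E. lra.
Qed.

Definition cost_set x y := fun c => exists A, coupling (m x) (m y) A /\ c = transport_cost adj A.


Lemma cost_nonneg x y c : cost_set x y c -> 0 <= c.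
Proof.
move=> [A [[HA _] ->]]. rewrite /transport_cost. apply rsum_ge0 => u; apply rsum_ge0 => v.
have := HA u v; have := pos_INR (gdist adj u v). nra.
Qed.

Lemma cost_inhabited x y : cost_set x y (transport_cost adj (fun u v => m x u * m y v)).
Proof.
exists (fun u v => m x u * m y v); split => //.
split; [|split].
- move=> u v; have := m_ge0 x u; have := m_ge0 y v; have := m_le1 x u; have := m_le1 y v. 
  split; nra.
- move=> u. by rewrite rsumZ m_sum Rmult_1_r.
- move=> v. rewrite (rsum_ext (G := fun u => m y v * m x u)); last by move=> u; ring.
  by rewrite rsumZ m_sum Rmult_1_r.
Qed.

Lemma W_exists x y : exists w, is_W adj (m x) (m y) w.
Proof.
set E := fun r => cost_set x y (- r).
have Hb : bound E.
{ exists 0 => r Hr. have := cost_nonneg Hr. lra. }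
have He : exists r, E r.
{ exists (- transport_cost adj (fun u v => m x u * m y v)). rewrite /E Ropp_involutive.
  apply cost_inhabited. }
have [l [Hl1 Hl2]] := completeness E Hb He.
exists (- l); split.
- move=> c Hc. have : E (- c) by rewrite /E Ropp_involutive. move/Hl1. lra.
- move=> w' Hw'. have : l <= - w'.
  { apply Hl2 => r Hr. have := Hw' _ Hr. lra. }
  lra.
Qed.

Lemma coupling_diff A x y g : coupling (m x) (m y) A ->
  Mop g x - Mop g y = rsum (fun u => rsum (fun v => A u v * (g u - g v))).
Proof.
move=> [_ [Hr Hc]].
have E1 : Mop g x = rsum (fun u => rsum (fun v => A u v * g u)).
{ apply rsum_ext => u. rewrite -Hr.
  rewrite (rsum_ext (F := fun v => A u v * g u) (G := fun v => g u * A u v)); last by move=> v; ring.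
  rewrite rsumZ. apply Rmult_comm. }
have E2 : Mop g y = rsum (fun u => rsum (fun v => A u v * g v)).
{ rewrite rsum_exchange. apply rsum_ext => v. rewrite -Hc.
  rewrite (rsum_ext (F := fun u => A u v * g v) (G := fun u => g v * A u v)); last by move=> u; ring.
  rewrite rsumZ. apply Rmult_comm. }
rewrite E1 E2.
rewrite (rsum_ext (F := fun u => rsum (fun v => A u v * (g u - g v)))
   (G := fun u => rsum (fun v => A u v * g u) + (-1) * rsum (fun v => A u v * g v))).
- rewrite rsumD rsumZ; ring.
- move=> u. rewrite -rsumZ -rsumD. apply rsum_ext => v; ring.
Qed.

Lemma coupling_bound A x y g L : coupling (m x) (m y) A -> glip L g ->
  Rabs (Mop g x - Mop g y) <= L * transport_cost adj A.
Proof.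
move=> HA Hg. rewrite (coupling_diff g HA). have [HA0 _] := HA.
have E : L * transport_cost adj A = rsum (fun u => rsum (fun v => A u v * (L * INR (gdist adj u v)))).
{ rewrite /transport_cost -rsumZ. apply rsum_ext => u. rewrite -rsumZ. apply rsum_ext => v. ring. }
rewrite E. apply Rabs_le. split.
- have : rsum (fun u => (-1) * rsum (fun v => A u v * (L * INR (gdist adj u v)))) <=
         rsum (fun u => rsum (fun v => A u v * (g u - g v))).
  { apply rsum_le => u. rewrite -rsumZ. apply rsum_le => v.
    have := Rabs_le_inv (Hg u v). have := HA0 u v. move=> [? ?] [? ?]. nra. }
  rewrite rsumZ. lra.
- apply rsum_le => u; apply rsum_le => v.
  have := Rabs_le_inv (Hg u v). have := HA0 u v. move=> [? ?] [? ?]. nra.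
Qed.

Lemma gdist_pos u v : u <> v -> 0 < INR (gdist adj u v).
Proof.
move=> Hne. apply lt_0_INR. apply/ltP. rewrite lt0n. apply/eqP => H.
by apply Hne; apply (gdist_eq0 Hconn H).
Qed.

Lemma kappa_le1 (u v : V) : u <> v -> kappa <= 1.
Proof.
move=> Hne. have [w Hw] := W_exists u v. have Hk := Hric Hne Hw.
have Hw0 : 0 <= w by apply (proj2 Hw) => c Hc; apply (cost_nonneg Hc).
have Hd := gdist_pos Hne.
have : 0 <= w / INR (gdist adj u v) by (apply Rmult_le_pos; [lra| left; apply Rinv_0_lt_compat; lra]).
lra.
Qed.

Lemma Mop_lip L g : glip L g -> 0 <= L -> glip (L * (1 - kappa)) (Mop g).
Proof.
move=> Hg HL u v. case: (eqVneq u v) => [->|Hne].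
- rewrite Rminus_diag_eq // Rabs_R0 gdist_refl /=. lra.
- have Hne' : u <> v by apply/eqP.
  have [w Hw] := W_exists u v. have Hk := Hric Hne' Hw. have Hd := gdist_pos Hne'.
  have HD : Rabs (Mop g u - Mop g v) <= L * w.
  { case: (Req_dec L 0) => HL0.
    - have [A [HA _]] := cost_inhabited u v.
      have := coupling_bound HA Hg. rewrite HL0 !Rmult_0_l. done.
    - have HLp : 0 < L by lra.
      have : Rabs (Mop g u - Mop g v) / L <= w.
      { apply (proj2 Hw) => c [A [HA ->]].
        have := coupling_bound HA Hg.
        move=> H. apply (Rmult_le_reg_l L) => //. rewrite /Rdiv. 
        replace (L * (Rabs (Mop g u - Mop g v) * / L)) with (Rabs (Mop g u - Mop g v)) by (field; lra).
        lra. }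
      move=> H. have := Rmult_le_compat_l L _ _ HL H.
      replace (L * (Rabs (Mop g u - Mop g v) / L)) with (Rabs (Mop g u - Mop g v)) by (field; lra).
      lra. }
  have Hwd : w <= (1 - kappa) * INR (gdist adj u v).
  { have : w / INR (gdist adj u v) <= 1 - kappa by lra.
    move=> H. have := Rmult_le_compat_r (INR (gdist adj u v)) _ _ (Rlt_le _ _ Hd) H.
    replace (w / INR (gdist adj u v) * INR (gdist adj u v)) with w by (field; lra). lra. }
  have : L * w <= L * ((1 - kappa) * INR (gdist adj u v)) by apply Rmult_le_compat_l.
  lra.
Qed.

Lemma rsum_lin3 (a b c : R) (F G H : V -> R) :
  rsum (fun y => a * F y + b * G y + c * H y) = a * rsum F + b * rsum G + c * rsum H.
Proof. by rewrite !rsumD !rsumZ. Qed.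

Lemma one_step L g x lam : glip L g -> 0 <= L <= 1 -> 0 <= lam -> 2 * lam <= 8/7 ->
  Mop (fun y => exp (lam * g y)) x <= exp (lam * Mop g x + 7/4 * lam^2 * L^2).
Proof.
move=> Hg [HL0 HL1] Hl0 Hl1.
have Hma := Rabs_le_inv (avg_bound x Hg HL0).
set mu := Mop g x in Hma *. set a := g x in Hma *. set c := 7/4 * lam^2.
have Hc0 : 0 <= c by rewrite /c; nra.
have Hpt : forall y, m x y * exp (lam * g y) <=
   (exp (lam*mu) * (1 - lam*mu + c*mu^2)) * m x y + (exp (lam*mu) * (lam - 2*c*mu)) * (m x y * g y)
     + (exp (lam*mu) * c) * (m x y * g y ^2).
{ move=> y.
  replace ((exp (lam*mu) * (1 - lam*mu + c*mu^2)) * m x y + (exp (lam*mu) * (lam - 2*c*mu)) * (m x y * g y)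
     + (exp (lam*mu) * c) * (m x y * g y ^2))
    with (m x y * (exp (lam*mu) * (1 + lam*(g y - mu) + c*(g y - mu)^2))) by ring.
  case: (Req_dec (m x y) 0) => Hm.
  - rewrite Hm !Rmult_0_l; lra.
  - apply Rmult_le_compat_l; first by apply m_ge0.
    have := Rabs_le_inv (supp_bound Hg HL0 Hm). rewrite -/a => Hy.
    set z := lam * (g y - mu).
    have Hz : -8/7 <= z <= 8/7 by rewrite /z; split; nra.
    have Hq := exp_quad Hz.
    replace (lam * g y) with (lam * mu + z) by (rewrite /z; ring).
    rewrite exp_plus.
    replace (1 + z + c * (g y - mu) ^ 2) with (1 + z + 7/4 * z^2)
      by (rewrite /z /c; ring).
    apply Rmult_le_compat_l; [left; apply exp_pos | exact Hq]. }
have S := rsum_le Hpt. rewrite rsum_lin3 m_sum in S.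
change (rsum (fun y => m x y * g y)) with mu in S.
set S2 := rsum (fun y => m x y * g y ^ 2) in S.
have HV : rsum (fun y => m x y * (g y - a)^2) <= rsum (fun y => L^2 * m x y).
{ apply rsum_le => y. case: (Req_dec (m x y) 0) => Hm.
  - rewrite Hm; lra.
  - have := Rabs_le_inv (supp_bound Hg HL0 Hm). rewrite -/a => Hy.
    have Hm0 := m_ge0 x y. have Hsq : (g y - a)^2 <= L^2 by nra.
    rewrite Rmult_comm. apply Rmult_le_compat_r; lra. }
rewrite rsumZ m_sum in HV.
have EV : rsum (fun y => m x y * (g y - a)^2) = a^2 * 1 + (-2*a) * mu + 1 * S2.
{ rewrite (rsum_ext (G := fun y => a^2 * m x y + (-2*a) * (m x y * g y) + 1 * (m x y * g y ^ 2))); 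
    last by move=> y; ring.
  by rewrite rsum_lin3 m_sum. }
rewrite /Mop. rewrite exp_plus.
have He := exp_pos (lam * mu). have He2 := exp_ineq1_le (c * L^2).
rewrite -/c. set E := exp (lam * mu) in He S *.
have : 1 + c * (S2 - mu^2) <= exp (c * L ^ 2).
{ have : S2 - mu^2 <= L^2. { rewrite EV in HV. have := pow2_ge_0 (a - mu). clear -HV. clearbody a mu S2. intros. nra. }
  move=> ?; nra. }
move=> H. 
have : E * (1 + c * (S2 - mu^2)) <= E * exp (c * L ^ 2) by apply Rmult_le_compat_l; lra.
move=> H2. 
have Eq : E * (1 - lam * mu + c * mu ^ 2) * 1 + E * (lam - 2 * c * mu) * mu + E * c * S2 = E * (1 + c * (S2 - mu^2)) by ring.
lra.
Qed.

Definition Pt t (h : V -> R) x := rsum (fun y => mstep m t x y * h y).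

Lemma mstep_ge0 t x y : 0 <= mstep m t x y.
Proof.
elim: t y => [|t IH] y /=.
- case: (x == y); lra.
- apply rsum_ge0 => z. apply Rmult_le_pos; [apply IH | apply m_ge0].
Qed.

Lemma Pt_0 h x : Pt 0 h x = h x.
Proof. by rewrite /Pt /= rsum_delta. Qed.

Lemma Pt_S t h x : Pt t.+1 h x = Pt t (Mop h) x.
Proof.
rewrite /Pt /=.
rewrite (rsum_ext (G := fun y => rsum (fun z => mstep m t x z * m z y * h y))); last first.
{ move=> y. rewrite Rmult_comm -rsumZ. apply rsum_ext => z; ring. }
rewrite rsum_exchange. apply rsum_ext => z. rewrite /Mop -rsumZ. apply rsum_ext => y; ring.
Qed.

Lemma Pt_mono t h1 h2 x : (forall y, h1 y <= h2 y) -> Pt t h1 x <= Pt t h2 x.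
Proof. move=> H; apply rsum_le => y; apply Rmult_le_compat_l; [apply mstep_ge0 | apply H]. Qed.

Lemma Pt_scale t c h x : Pt t (fun y => c * h y) x = c * Pt t h x.
Proof. rewrite /Pt -rsumZ; apply rsum_ext => y; ring. Qed.

Lemma mgf_iter (lam : R) : 0 < kappa -> kappa <= 1 -> 0 <= lam -> 2 * lam <= 8/7 ->
  forall t L g, glip L g -> 0 <= L <= 1 -> forall x,
  Pt t (fun y => exp (lam * g y)) x <= exp (lam * Pt t g x + 7/4 * lam^2 * L^2 / kappa).
Proof.
move=> Hk Hk1 Hl0 Hl1 t. elim: t => [|t IH] L g Hg [HL0 HL1] x.
- rewrite !Pt_0. apply exp_le.
  have : 0 <= 7/4 * lam^2 * L^2 / kappa.
  { apply Rmult_le_pos; [nra | left; apply Rinv_0_lt_compat; lra]. }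
  lra.
- rewrite !Pt_S.
  set K := 7/4 * lam^2 * L^2.
  have H1 : Pt t (Mop (fun y => exp (lam * g y))) x <= Pt t (fun y => exp K * exp (lam * Mop g y)) x.
  { apply Pt_mono => y. rewrite -exp_plus Rplus_comm. by apply one_step. }
  rewrite Pt_scale in H1.
  have HgM := Mop_lip Hg HL0.
  have HL' : 0 <= L * (1 - kappa) <= 1 by split; nra.
  have H2 := IH _ _ HgM HL' x.
  have H3 : exp K * Pt t (fun y => exp (lam * Mop g y)) x <=
    exp K * exp (lam * Pt t (Mop g) x + 7/4 * lam^2 * (L * (1 - kappa))^2 / kappa).
  { apply Rmult_le_compat_l; [left; apply exp_pos | exact H2]. }
  rewrite -exp_plus in H3.
  apply Rle_trans with (1 := H1). apply Rle_trans with (1 := H3). apply exp_le.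
  have HK : 0 <= K by rewrite /K; nra.
  have E : K / kappa - (K + 7/4 * lam^2 * (L * (1 - kappa))^2 / kappa) = K * (1 - kappa)
    by rewrite /K; field; lra.
  have : 0 <= K * (1 - kappa) by nra.
  rewrite -/K. lra.
Qed.

Lemma cv_rsum (a : nat -> V -> R) (b : V -> R) :
  (forall y, Un_cv (fun t => a t y) (b y)) -> Un_cv (fun t => rsum (a t)) (rsum b).
Proof.
move=> H. rewrite /rsum.
elim: (index_enum V) => [|z r IH].
- rewrite big_nil. move=> e He. exists 0%nat => n _. rewrite big_nil /R_dist Rminus_diag_eq // Rabs_R0. lra.
- rewrite big_cons. 
  have := CV_plus _ _ _ _ (H z) IH.
  apply: Un_cv_ext => n. by rewrite big_cons.
Qed.

End D.

Lemma INR_addn a b : INR (a + b)%nat = INR a + INR b.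
Proof. exact (plus_INR a b). Qed.

Lemma cv_const (c : R) : Un_cv (fun _ => c) c.
Proof. move=> e He. exists 0%nat => n _. rewrite /R_dist Rminus_diag_eq // Rabs_R0. lra. Qed.

Section E.
Variable V : finType.
Variable adj : rel V.
Variable m : V -> V -> R.
Variable kappa : R.
Hypothesis Hsym : sym_graph adj.
Hypothesis Hconn : graph_connected adj.
Hypothesis Hwalk : random_walk adj m.
Hypothesis Hric : ricci_at_least adj m kappa.

Lemma reach_sym n x y : reach adj n x y -> reach adj n y x.
Proof.
elim: n x => [|n IH] x /=.
- by rewrite eq_sym.
- move=> /existsP [z /andP [Hxz Hz]].
  have H1 : reach adj 1 z x by apply/existsP; exists x; rewrite /= eqxx andbT Hsym.
  have := reach_cat (IH _ Hz) H1. by rewrite addn1.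
Qed.

Lemma gdist_sym x y : gdist adj x y = gdist adj y x.
Proof.
apply/eqP; rewrite eqn_leq; apply/andP; split; apply gdist_le; apply reach_sym;
  apply (gdist_reach Hconn).
Qed.

Lemma glip_dist x : glip adj 1 (fun z => INR (gdist adj x z)).
Proof.
move=> u v. rewrite Rmult_1_l.
have H1 := le_INR _ _ (elimT leP (gdist_tri Hconn x v u)).
have H2 := le_INR _ _ (elimT leP (gdist_tri Hconn x u v)).
rewrite INR_addn in H1. rewrite INR_addn in H2. rewrite (gdist_sym v u) in H1.
apply Rabs_le. lra.
Qed.

Lemma diam x y : kappa <= 1 -> kappa * INR (gdist adj x y) <= 2.
Proof.
move=> Hk1.
set g := fun z => INR (gdist adj x z).
have Hg := glip_dist x.
have HM := Mop_lip Hconn Hwalk Hric Hg (Rle_0_1).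
have Ha := Rabs_le_inv (avg_bound Hwalk x Hg Rle_0_1).
have Hb := Rabs_le_inv (avg_bound Hwalk y Hg Rle_0_1).
have Hc := Rabs_le_inv (HM y x).
rewrite (gdist_sym y x) in Hc.
rewrite /g /Mop /= in Ha Hb Hc. rewrite gdist_refl /= in Ha.
set A := rsum _ in Ha Hc. set B := rsum _ in Hb Hc.
lra.
Qed.

Lemma chernoff (nu : V -> R) (g : V -> R) lam s K :
  (forall x, 0 <= nu x) -> 0 <= lam ->
  rsum (fun x => nu x * exp (lam * g x)) <= exp (lam * expect nu g + K) ->
  rsum (fun x => if Rlt_dec s (g x - expect nu g) then nu x else 0) <= exp (- lam * s + K).
Proof.
move=> Hnu Hl H. set Eg := expect nu g in H *.
have Hpt : forall x, (if Rlt_dec s (g x - Eg) then nu x else 0) <=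
   exp (- lam * (Eg + s)) * (nu x * exp (lam * g x)).
{ move=> x. have := Hnu x.
  replace (exp (- lam * (Eg + s)) * (nu x * exp (lam * g x))) with
    (nu x * exp (lam * (g x - Eg - s))); last first.
  { replace (lam * (g x - Eg - s)) with (- lam * (Eg + s) + lam * g x) by ring. rewrite exp_plus; ring. }
  have := exp_pos (lam * (g x - Eg - s)). have := exp_ineq1_le (lam * (g x - Eg - s)).
  case: (Rlt_dec s (g x - Eg)) => Hs; move=> ? ? ?.
  - have : 0 <= lam * (g x - Eg - s) by apply Rmult_le_pos; lra.
    move=> ?. have : nu x * 1 <= nu x * exp (lam * (g x - Eg - s)) by apply Rmult_le_compat_l; lra.
    simpl; lra.
  - simpl; apply Rmult_le_pos; lra. }
have := rsum_le Hpt. rewrite rsumZ. move=> H1.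
have H2 : exp (- lam * (Eg + s)) * rsum (fun x => nu x * exp (lam * g x)) <=
          exp (- lam * (Eg + s)) * exp (lam * Eg + K).
{ apply Rmult_le_compat_l; [left; apply exp_pos | exact H]. }
rewrite -exp_plus in H2.
replace (- lam * s + K) with (- lam * (Eg + s) + (lam * Eg + K)) by ring.
lra.
Qed.

Lemma dev_eq (nu : V -> R) (g : V -> R) x : rsum nu = 1 ->
  g x - expect nu g = rsum (fun y => nu y * (g x - g y)).
Proof.
move=> H1. rewrite /expect.
have E : rsum (fun y => nu y * (g x - g y)) = g x * rsum nu + (-1) * rsum (fun y => nu y * g y).
{ rewrite -!rsumZ -rsumD. apply rsum_ext => y; ring. }
rewrite E H1; ring.
Qed.

Lemma tail_zero (nu : V -> R) (g : V -> R) s :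
  (forall x, g x - expect nu g <= s) ->
  rsum (fun x => if Rlt_dec s (g x - expect nu g) then nu x else 0) = 0.
Proof.
move=> H. transitivity (rsum (fun _ : V => 0)); last exact (rsum0 V).
apply rsum_ext => x.
case: (Rlt_dec s (g x - expect nu g)) => Hs /=; last by [].
have := H x. lra.
Qed.

End E.

Lemma upper_tail (V : finType) (adj : rel V) (m : V -> V -> R) (nu : V -> R) (kappa : R)
  (Hsym : sym_graph adj) (Hconn : graph_connected adj)
  (Hwalk : random_walk adj m) (Herg : ergodic m) (Hnu : rw_invariant m nu)
  (Hk : 0 < kappa) (Hric : ricci_at_least adj m kappa)
  (g : V -> R) (Hg : lipschitz adj 1 g) (t : R) (Ht : 1 <= t) :
  rsum (fun x => if Rlt_dec t (g x - expect nu g) then nu x else 0) <= exp (- (t ^ 2 * kappa) / 7).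
Proof.
have [[Hnu0 Hnu1] _] := Hnu.
have Hgl : glip adj 1 g by move=> u v; apply: (lip_gdist Hconn u v Hg).
case: (classic (exists u v : V, u <> v)) => [[u [v Huv]] | Hno].
- have Hk1 : kappa <= 1 by apply: (kappa_le1 Hconn Hwalk Hric Huv).
  case: (Rle_lt_dec (t * kappa) 2) => Htk.
  + set lam := 2 * t * kappa / 7.
    have Hl0 : 0 <= lam by rewrite /lam; nra.
    have Hl1 : 2 * lam <= 8/7 by rewrite /lam; lra.
    set K := 7/4 * lam^2 * 1^2 / kappa.
    have HM : rsum (fun x => nu x * exp (lam * g x)) <= exp (lam * expect nu g + K).
    { have [nu0 [Hinv [Huq Hcv]]] := Herg.
      have Heq := Huq nu Hnu. rewrite -Heq in Hcv.
      have Hit := fun n => mgf_iter Hconn Hwalk Hric Hk Hk1 Hl0 Hl1 n Hgl (conj Rle_0_1 (Rle_refl 1)) u.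
      have C1 : Un_cv (fun n => Pt m n (fun y => exp (lam * g y)) u) (rsum (fun y => nu y * exp (lam * g y))).
      { apply cv_rsum => y. exact (CV_mult _ _ _ _ (Hcv u y) (cv_const _)). }
      have C2 : Un_cv (fun n => Pt m n g u) (expect nu g).
      { apply cv_rsum => y. exact (CV_mult _ _ _ _ (Hcv u y) (cv_const _)). }
      have C3 : Un_cv (fun n => exp (lam * Pt m n g u + K)) (exp (lam * expect nu g + K)).
      { apply (continuity_seq exp (fun n => lam * Pt m n g u + K)).
        - apply derivable_continuous_pt, derivable_pt_exp.
        - exact (CV_plus _ _ _ _ (CV_mult _ _ _ _ (cv_const lam) C2) (cv_const K)). }
      exact (Rle_cv_lim Hit C1 C3). }
    have := chernoff t Hnu0 Hl0 HM.
    have -> : - lam * t + K = - (t ^ 2 * kappa) / 7 by rewrite /K /lam; field; lra.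
    done.
  + rewrite tail_zero; first by left; apply exp_pos.
    move=> x. rewrite (dev_eq g x Hnu1).
    have Hb : rsum (fun y => nu y * (g x - g y)) <= rsum (fun y => (2 / kappa) * nu y).
    { apply rsum_le => y. rewrite Rmult_comm. apply Rmult_le_compat_r; first by apply Hnu0.
      have H1 := Rabs_le_inv (Hgl x y). have H2 := diam Hsym Hconn Hwalk Hric x y Hk1.
      have : INR (gdist adj x y) <= 2 / kappa.
      { apply (Rmult_le_reg_l kappa) => //. replace (kappa * (2 / kappa)) with 2 by (field; lra). lra. }
      lra. }
    rewrite rsumZ Hnu1 in Hb.
    have : 2 / kappa < t.
    { apply (Rmult_lt_reg_l kappa) => //. replace (kappa * (2 / kappa)) with 2 by (field; lra). lra. }
    lra.
- rewrite tail_zero; first by left; apply exp_pos.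
  move=> x. rewrite (dev_eq g x Hnu1).
  have -> : rsum (fun y => nu y * (g x - g y)) = rsum (fun _ : V => 0).
  { apply rsum_ext => y. have -> : y = x.
    { apply NNPP => Hyx. apply Hno. by exists y, x. }
    ring. }
  rewrite rsum0. lra.
Qed.

Theorem theorem1 (V : finType) (adj : rel V) (m : V -> V -> R) (nu : V -> R) (kappa : R)
  (Hsym : sym_graph adj) (Hconn : graph_connected adj)
  (Hwalk : random_walk adj m) (Herg : ergodic m) (Hnu : rw_invariant m nu)
  (Hk : 0 < kappa) (Hric : ricci_at_least adj m kappa)
  (f : V -> R) (Hf : lipschitz adj 1 f) (t : R) (Ht : 1 <= t) :
  prob nu (fun x => f x - expect nu f > t) (fun x => Rlt_dec t (f x - expect nu f))
    <= exp (- (t ^ 2 * kappa) / 7) /\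
  prob nu (fun x => f x - expect nu f < - t) (fun x => Rlt_dec (f x - expect nu f) (- t))
    <= exp (- (t ^ 2 * kappa) / 7).
Proof.
split.
- exact (upper_tail Hsym Hconn Hwalk Herg Hnu Hk Hric Hf Ht).
- have Hf' : lipschitz adj 1 (fun x => - f x).
  { move=> u v H. replace (- f u - - f v) with (- (f u - f v)) by ring. rewrite Rabs_Ropp. by apply Hf. }
  have H := upper_tail Hsym Hconn Hwalk Herg Hnu Hk Hric Hf' Ht.
  have Ee : expect nu (fun x => - f x) = - expect nu f.
  { rewrite /expect. rewrite (rsum_ext (G := fun x => (-1) * (nu x * f x))); last by move=> x; ring.
    rewrite rsumZ; ring. }
  rewrite Ee in H. rewrite /prob.
  apply Rle_trans with (2 := H); right. apply rsum_ext => x.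
  case: (Rlt_dec (f x - expect nu f) (- t)) => H1; case: (Rlt_dec t (- f x - - expect nu f)) => H2 /=;
    try reflexivity; lra.
Qed.
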